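(* Let $(x_n)$ be a nonincreasing interval-filling sequence of positive reals with cardinal function $f$, and suppose there are indices $k<m$ such that $x_m<r_m$ and $x_k+x_m<r_k$. Then there exists $y\in\mathcal{A}((x_n))$ with $f(y)\ge4$ (with $\omega,\mathfrak{c}$ counting as $\ge4$).
   Context: For a summable sequence $\mathbf{x}=(x_n)$ of positive reals, $\mathcal{A}(\mathbf{x})=\{\sum_{n\in A}x_n: A\subseteq\mathbb{N}\}$ is its achievement set and its cardinal function $f$ assigns to $x\in\mathcal{A}(\mathbf{x})$ the cardinality (a positive integer, $\omega$, or $\mathfrak{c}$) of $\{(\varepsilon_n)\in\{0,1\}^{\mathbb{N}}:\sum\varepsilon_nx_n=x\}$. The sequence is interval-filling if $\mathcal{A}(\mathbf{x})$ is an interval. The tail sums are $r_n=\sum_{k=n+1}^\infty x_k$. *)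

(* Defs.v *)
From Stdlib Require Import Reals.
From Coquelicot Require Import Coquelicot.
Open Scope R_scope.

(* Sequences are indexed by nat (starting at 0); the shift from the paper's
   indexing starting at 1 is immaterial. *)

Definition is_rep (x : nat -> R) (eps : nat -> bool) (y : R) : Prop :=
  is_series (fun n => if eps n then x n else 0) y.

Definition achievement_set (x : nat -> R) : R -> Prop :=
  fun y => exists eps : nat -> bool, is_rep x eps y.

Definition interval_filling (x : nat -> R) : Prop :=
  forall a b c, achievement_set x a -> achievement_set x b ->
    a <= c <= b -> achievement_set x c.

Definition tail (x : nat -> R) (n : nat) : R :=
  Series (fun k => x (n + 1 + k)%nat).

Definition seq_differ (e1 e2 : nat -> bool) : Prop := exists n, e1 n <> e2 n.

Definition card_fun_ge4 (x : nat -> R) (y : R) : Prop :=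
  exists e1 e2 e3 e4 : nat -> bool,
    is_rep x e1 y /\ is_rep x e2 y /\ is_rep x e3 y /\ is_rep x e4 y /\
    seq_differ e1 e2 /\ seq_differ e1 e3 /\ seq_differ e1 e4 /\
    seq_differ e2 e3 /\ seq_differ e2 e4 /\ seq_differ e3 e4.

(* Main.v *)
Require Import Defs.
From Stdlib Require Import Reals Lra Lia Classical.
From Coquelicot Require Import Coquelicot.
Open Scope R_scope.

Lemma rep_ex (x : nat -> R) (e : nat -> bool) (hpos : forall n, 0 < x n) (hsum : ex_series x) :
  ex_series (fun j => if e j then x j else 0).
Proof.
  apply (ex_series_le (fun j => if e j then x j else 0) x); [|exact hsum].
  intros n. change (norm (if e n then x n else 0)) with (Rabs (if e n then x n else 0)).
  specialize (hpos n). destruct (e n); rewrite Rabs_pos_eq; lra.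
Qed.

Lemma rep_le (x : nat -> R) (e1 e2 : nat -> bool) (a b : R) (hpos : forall n, 0 < x n) (hsum : ex_series x) :
  is_rep x e1 a -> is_rep x e2 b -> (forall j, e1 j = true -> e2 j = true) -> a <= b.
Proof.
  intros H1 H2 Hs.
  rewrite <- (is_series_unique _ _ H1), <- (is_series_unique _ _ H2).
  apply Series_le; [|apply rep_ex; auto].
  intros n. specialize (hpos n). specialize (Hs n).
  destruct (e1 n), (e2 n); try lra; try (specialize (Hs eq_refl); discriminate).
Qed.

Lemma rep_union (x : nat -> R) (e1 e2 : nat -> bool) (a b : R) :
  is_rep x e1 a -> is_rep x e2 b -> (forall j, e1 j = true -> e2 j = false) ->
  is_rep x (fun j => orb (e1 j) (e2 j)) (a + b).
Proof.
  intros H1 H2 Hd. unfold is_rep in *.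
  apply (is_series_ext (fun n => plus (if e1 n then x n else 0) (if e2 n then x n else 0))).
  - intros n. change (plus (if e1 n then x n else 0) (if e2 n then x n else 0)) with
      ((if e1 n then x n else 0) + (if e2 n then x n else 0)).
    specialize (Hd n). destruct (e1 n); [rewrite Hd by reflexivity|]; simpl; destruct (e2 n); lra.
  - exact (is_series_plus _ _ _ _ H1 H2).
Qed.

Lemma rep_ext (x : nat -> R) (e1 e2 : nat -> bool) (a b : R) : (forall j, e1 j = e2 j) -> a = b -> is_rep x e1 a -> is_rep x e2 b.
Proof.
  intros He Hab H; subst b. unfold is_rep in *. apply (is_series_ext _ _ _ (fun n => f_equal (fun t : bool => if t then x n else 0) (He n)) H).
Qed.

Lemma sum_n_const_after (c : nat -> R) N : (forall i, (N < i)%nat -> c i = 0) ->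
  forall n, (N <= n)%nat -> sum_n c n = sum_n c N.
Proof.
  intros Hc n Hn. induction Hn as [|n Hn IHn]; [reflexivity|].
  rewrite sum_Sn, IHn, Hc by lia. change (sum_n c N + 0 = sum_n c N). lra.
Qed.

Lemma finite_rep (c : nat -> R) N : (forall i, (N < i)%nat -> c i = 0) -> is_series c (sum_n c N).
Proof.
  intros Hc. cut (is_lim_seq (sum_n c) (sum_n c N)); [intro H; exact H|].
  apply (is_lim_seq_ext_loc (fun _ => sum_n c N)).
  - exists N. intros n Hn. symmetry. apply sum_n_const_after; auto.
  - apply is_lim_seq_const.
Qed.

Lemma sum_n_zero_upto (c : nat -> R) N : (forall j, (j <= N)%nat -> c j = 0) -> sum_n c N = 0.
Proof.
  induction N; intros Hc. rewrite sum_O. apply Hc; lia.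
  rewrite sum_Sn, IHN by (intros; apply Hc; lia). rewrite Hc by lia. change (0+0=0). lra.
Qed.

Lemma rep_zero (x : nat -> R) : is_rep x (fun _ => false) 0.
Proof.
  unfold is_rep. pose proof (finite_rep (fun _ => 0) 0 (fun _ _ => eq_refl)) as H.
  rewrite sum_O in H. exact H.
Qed.

Lemma rep_sing (x : nat -> R) p : is_rep x (fun j => Nat.eqb j p) (x p).
Proof.
  unfold is_rep.
  assert (Hc : forall i, (p < i)%nat -> (if Nat.eqb i p then x i else 0) = 0).
  { intros i Hi. destruct (Nat.eqb_spec i p); [lia|reflexivity]. }
  pose proof (finite_rep _ p Hc) as H.
  replace (x p) with (sum_n (fun j => if Nat.eqb j p then x j else 0) p); [exact H|symmetry].
  destruct p. rewrite sum_O. reflexivity.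
  rewrite sum_Sn, sum_n_zero_upto. rewrite Nat.eqb_refl. change (x (S p) = 0 + x (S p)). lra.
  intros j Hj. destruct (Nat.eqb_spec j (S p)); [lia|reflexivity].
Qed.

Lemma tail_formula (x : nat -> R) (hsum : ex_series x) n : tail x n = Series x - sum_n x n.
Proof.
  assert (H : is_series (fun k => x (S n + k)%nat) (Series x - sum_n x n)).
  { apply (is_series_incr_n x (S n)); [lia|]. simpl.
    match goal with |- is_series _ ?L => replace L with (Series x)
      by (change (Series x = Series x - sum_n x n + sum_n x n); ring) end.
    apply Series_correct; auto. }
  unfold tail. rewrite <- (is_series_unique _ _ H). apply Series_ext. intros k. f_equal. lia.
Qed.

Lemma tail_rec (x : nat -> R) (hsum : ex_series x) n : tail x n = x (S n) + tail x (S n).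
Proof. rewrite !tail_formula, sum_Sn by auto. change (Series x - sum_n x n = x (S n) + (Series x - (sum_n x n + x (S n)))). ring. Qed.

Lemma rep_tail (x : nat -> R) (hsum : ex_series x) n : is_rep x (fun j => Nat.ltb n j) (tail x n).
Proof.
  unfold is_rep. apply (is_series_decr_n _ (S n)); [lia|]. simpl.
  rewrite sum_n_zero_upto.
  2:{ intros j Hj. destruct (Nat.ltb_spec n j); [lia|reflexivity]. }
  match goal with |- is_series _ ?L => replace L with (tail x n)
      by (change (tail x n = tail x n + - 0); ring) end.
  apply (is_series_ext (fun k => x (n + 1 + k)%nat)).
  { intros k. destruct (Nat.ltb_spec n (S (n + k))); [|lia]. f_equal. lia. }
  apply Series_correct. apply (ex_series_incr_n x (n+1)). auto.
Qed.

Lemma tail_lim (x : nat -> R) (hsum : ex_series x) : is_lim_seq (tail x) 0.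
Proof.
  apply (is_lim_seq_ext (fun n => Series x - sum_n x n)).
  { intros n. rewrite tail_formula; auto. }
  replace 0 with (Series x - Series x) by ring.
  apply is_lim_seq_minus'. apply is_lim_seq_const.
  exact (Series_correct _ hsum).
Qed.

Fixpoint grem (x : nat -> R) (n : nat) (v : R) (j : nat) : R :=
  match j with
  | O => v
  | S j' => let r := grem x n v j' in
      if Nat.ltb n j' then (if Rle_dec (x j') r then r - x j' else r) else r
  end.

Definition geps (x : nat -> R) (n : nat) (v : R) (j : nat) : bool :=
  andb (Nat.ltb n j) (if Rle_dec (x j) (grem x n v j) then true else false).

Lemma grem_S x n v j : grem x n v (S j) =
  if geps x n v j then grem x n v j - x j else grem x n v j.
Proof.
  simpl. unfold geps. destruct (Nat.ltb n j); simpl; [destruct Rle_dec|]; reflexivity.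
Qed.

Lemma greedy (x : nat -> R) (hpos : forall n, 0 < x n) (hsum : ex_series x)
  (hle : forall n, x n <= tail x n) n v :
  0 <= v <= tail x n -> exists e, (forall j, (j <= n)%nat -> e j = false) /\ is_rep x e v.
Proof.
  intros Hv. exists (geps x n v). split.
  { intros j Hj. unfold geps. destruct (Nat.ltb_spec n j); [lia|reflexivity]. }
  assert (Hinit : forall j, (j <= n + 1)%nat -> grem x n v j = v).
  { induction j; intros Hj; [reflexivity|]. rewrite grem_S. unfold geps.
    destruct (Nat.ltb_spec n j); [lia|]. simpl. apply IHj; lia. }
  assert (Hinv : forall d, 0 <= grem x n v (n + 1 + d) <= tail x (n + d)).
  { induction d.
    - rewrite Hinit by lia. rewrite Nat.add_0_r. exact Hv.
    - replace (n + 1 + S d)%nat with (S (n + 1 + d)) by lia.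
      rewrite grem_S. unfold geps. destruct (Nat.ltb_spec n (n + 1 + d)); [|lia]. simpl.
      replace (n + S d)%nat with (S (n + d)) by lia.
      replace (n + 1 + d)%nat with (S (n + d)) in * by lia.
      pose proof (tail_rec x hsum (n + d)). pose proof (hle (S (n + d))).
      destruct Rle_dec; lra. }
  assert (Hpart : forall p, sum_n (fun j => if geps x n v j then x j else 0) p = v - grem x n v (S p)).
  { induction p.
    - rewrite sum_O, grem_S. simpl. destruct (geps x n v 0); ring.
    - rewrite sum_Sn, IHp. rewrite (grem_S x n v (S p)).
      change (v - grem x n v (S p) + (if geps x n v (S p) then x (S p) else 0) =
        v - (if geps x n v (S p) then grem x n v (S p) - x (S p) else grem x n v (S p))).
      destruct (geps x n v (S p)); ring. }
  assert (Hlim : is_lim_seq (fun p => grem x n v (S p)) 0).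
  { apply (is_lim_seq_le_le_loc (fun _ => 0) _ (tail x)).
    - exists n. intros p Hp. replace (S p) with (n + 1 + (p - n))%nat by lia.
      replace p with (n + (p - n))%nat at 3 by lia. apply Hinv.
    - apply is_lim_seq_const.
    - apply tail_lim; auto. }
  unfold is_rep. cut (is_lim_seq (sum_n (fun j => if geps x n v j then x j else 0)) v);
    [intro H; exact H|].
  apply (is_lim_seq_ext (fun p => v - grem x n v (S p))).
  { intros p. symmetry. apply Hpart. }
  pose proof (is_lim_seq_minus' _ _ v 0 (is_lim_seq_const v) Hlim) as H.
  rewrite Rminus_0_r in H. exact H.
Qed.

Lemma noninc (x : nat -> R) (hnoninc : forall n, x (S n) <= x n) i j :
  (i <= j)%nat -> x j <= x i.
Proof. intros H; induction H; [lra|]. specialize (hnoninc m). lra. Qed.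

Lemma term_le (x : nat -> R) (hpos : forall n, 0 < x n) (hsum : ex_series x) e s j :
  is_rep x e s -> e j = true -> x j <= s.
Proof.
  intros H Hj. apply (rep_le x (fun i => Nat.eqb i j) e); auto. apply rep_sing.
  intros i Hi. apply Nat.eqb_eq in Hi. subst; auto.
Qed.

Lemma x_le_tail (x : nat -> R) (hpos : forall n, 0 < x n) (hsum : ex_series x)
  (hnoninc : forall n, x (S n) <= x n) (hif : interval_filling x) n : x n <= tail x n.
Proof.
  destruct (Rle_lt_dec (x n) (tail x n)) as [H|H]; [exact H|exfalso].
  destruct (hif (tail x n) (x n) ((tail x n + x n)/2)) as [e He].
  - exists (fun j => Nat.ltb n j). apply rep_tail; auto.
  - exists (fun j => Nat.eqb j n). apply rep_sing.
  - lra.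
  - destruct (classic (exists j, (j <= n)%nat /\ e j = true)) as [[j [Hj Hej]]|Hno].
    + pose proof (term_le x hpos hsum e _ j He Hej). pose proof (noninc x hnoninc j n Hj). lra.
    + assert (Hle : (tail x n + x n) / 2 <= tail x n).
      { apply (rep_le x e (fun j => Nat.ltb n j)); auto. apply rep_tail; auto.
        intros j Hj. destruct (Nat.ltb_spec n j); [reflexivity|].
        exfalso. apply Hno. exists j. split; [lia|exact Hj]. }
      lra.
Qed.

Theorem theorem4p13 (x : nat -> R)
  (hpos : forall n, 0 < x n)
  (hsum : ex_series x)
  (hnoninc : forall n, x (S n) <= x n)
  (hif : interval_filling x)
  (k m : nat) (hkm : (k < m)%nat)
  (hm : x m < tail x m)
  (hk : x k + x m < tail x k) :
  exists y, achievement_set x y /\ card_fun_ge4 x y.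
Proof.
  pose proof (x_le_tail x hpos hsum hnoninc hif) as hle.
  pose proof (fun n => rep_le x (fun _ => false) _ 0 _ hpos hsum (rep_zero x) (rep_tail x hsum n)
     (fun j (H : false = true) => ltac:(discriminate))) as htpos.
  set (eta := Rmin (tail x m - x m) (tail x k - x k - x m) / 2).
  assert (Heta : 0 < eta).
  { unfold eta. apply Rmin_case; lra. }
  assert (Heta1 : 2 * eta <= tail x m - x m) by (unfold eta; pose proof (Rmin_l (tail x m - x m) (tail x k - x k - x m)); lra).
  assert (Heta2 : 2 * eta <= tail x k - x k - x m) by (unfold eta; pose proof (Rmin_r (tail x m - x m) (tail x k - x k - x m)); lra).
  set (v := x k + x m + eta).
  destruct (greedy x hpos hsum hle k v) as [H [HHk HH]].
  { unfold v. pose proof (hpos k); pose proof (hpos m). lra. }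
  pose proof (tail_lim x hsum) as Hl. apply is_lim_seq_spec in Hl.
  destruct (Hl (mkposreal eta Heta)) as [N0 HN0]. simpl in HN0.
  set (N := (N0 + k + m)%nat).
  assert (HtN : tail x N < eta).
  { specialize (HN0 N ltac:(unfold N; lia)). rewrite Rminus_0_r in HN0.
    pose proof (Rle_abs (tail x N)). lra. }
  set (Hlow := fun j => andb (H j) (Nat.leb j N)).
  set (Hhigh := fun j => andb (H j) (Nat.ltb N j)).
  set (s := sum_n (fun j => if Hlow j then x j else 0) N).
  assert (Hs : is_rep x Hlow s).
  { apply finite_rep. intros i Hi. unfold Hlow. destruct (Nat.leb_spec i N); [lia|].
    rewrite Bool.andb_false_r. reflexivity. }
  set (h := Series (fun j => if Hhigh j then x j else 0)).
  assert (Hh : is_rep x Hhigh h) by (apply Series_correct, rep_ex; auto).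
  assert (Hsh : s + h = v).
  { assert (U := rep_union x Hlow Hhigh s h Hs Hh).
    assert (D : forall j, Hlow j = true -> Hhigh j = false).
    { intros j. unfold Hlow, Hhigh. destruct (H j); simpl; [|auto].
      destruct (Nat.leb_spec j N), (Nat.ltb_spec N j); auto; lia. }
    specialize (U D).
    assert (U' : is_rep x H (s + h)).
    { refine (rep_ext x _ _ _ _ _ eq_refl U). intros j.
      unfold Hlow, Hhigh. destruct (H j); simpl; [|reflexivity].
      destruct (Nat.leb_spec j N), (Nat.ltb_spec N j); auto; lia. }
    unfold is_rep in U', HH. rewrite <- (is_series_unique _ _ U'), <- (is_series_unique _ _ HH).
    reflexivity. }
  assert (Hh0 : 0 <= h) by (apply (rep_le x (fun _ => false) Hhigh); auto; try apply rep_zero; intros; discriminate).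
  assert (Hh1 : h <= tail x N).
  { apply (rep_le x Hhigh (fun j => Nat.ltb N j)); auto. apply rep_tail; auto.
    intros j. unfold Hhigh. destruct (H j); simpl; auto. }
  pose proof (tail_rec x hsum N) as HtrN. pose proof (htpos (S N)). pose proof (hpos (S N)).
  set (y := s + x (S N)).
  assert (Hy1 : 0 <= y - x k - x m <= tail x m) by (unfold y, v in *; pose proof (hpos m); lra).
  assert (Hy2 : 0 <= y - x k <= tail x m) by (unfold y, v in *; pose proof (hpos m); lra).
  destruct (greedy x hpos hsum hle m _ Hy1) as [G1 [HG1 HG1r]].
  destruct (greedy x hpos hsum hle m _ Hy2) as [G2 [HG2 HG2r]].
  destruct (greedy x hpos hsum hle (S N) (x (S N)) ltac:(split; [lra|apply hle])) as [C [HC HCr]].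
  set (e1 := fun j => orb (Nat.eqb j k) (orb (Nat.eqb j m) (G1 j))).
  set (e2 := fun j => orb (Nat.eqb j k) (G2 j)).
  set (e3 := fun j => orb (Hlow j) (Nat.eqb j (S N))).
  set (e4 := fun j => orb (Hlow j) (C j)).
  assert (R1 : is_rep x e1 y).
  { apply (rep_ext x _ _ (x k + (x m + (y - x k - x m))) _ (fun j => eq_refl)); [ring|].
    apply rep_union; [apply rep_sing| apply rep_union; [apply rep_sing|exact HG1r|]|].
    - intros j Hj. apply Nat.eqb_eq in Hj. subst. apply HG1. lia.
    - intros j Hj. apply Nat.eqb_eq in Hj. subst.
      destruct (Nat.eqb_spec k m); [lia|]. simpl. apply HG1. lia. }
  assert (R2 : is_rep x e2 y).
  { apply (rep_ext x _ _ (x k + (y - x k)) _ (fun j => eq_refl)); [ring|].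
    apply rep_union; [apply rep_sing|exact HG2r|].
    intros j Hj. apply Nat.eqb_eq in Hj. subst. apply HG2. lia. }
  assert (Dlow : forall j, Hlow j = true -> (j <= N)%nat).
  { intros j. unfold Hlow. destruct (H j); simpl; [|discriminate].
    intros Hj. apply Nat.leb_le in Hj. exact Hj. }
  assert (R3 : is_rep x e3 y).
  { apply rep_union; [exact Hs|apply rep_sing|].
    intros j Hj. apply Dlow in Hj. destruct (Nat.eqb_spec j (S N)); [lia|reflexivity]. }
  assert (R4 : is_rep x e4 y).
  { apply rep_union; [exact Hs|exact HCr|].
    intros j Hj. apply Dlow in Hj. apply HC. lia. }
  assert (Lk : Hlow k = false) by (unfold Hlow; rewrite HHk by lia; reflexivity).
  assert (LSN : Hlow (S N) = false).
  { unfold Hlow. destruct (Nat.leb_spec (S N) N); [lia|]. apply Bool.andb_false_r. }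
  exists y. split; [exists e3; exact R3|].
  exists e1, e2, e3, e4. repeat split; auto.
  - exists m. unfold e1, e2. rewrite Nat.eqb_refl, HG2 by lia.
    destruct (Nat.eqb_spec m k); [lia|]. simpl. discriminate.
  - exists k. unfold e1, e3. rewrite Nat.eqb_refl, Lk.
    destruct (Nat.eqb_spec k (S N)); [unfold N in *; lia|]. discriminate.
  - exists k. unfold e1, e4. rewrite Nat.eqb_refl, Lk, HC by (unfold N; lia). discriminate.
  - exists k. unfold e2, e3. rewrite Nat.eqb_refl, Lk.
    destruct (Nat.eqb_spec k (S N)); [unfold N in *; lia|]. discriminate.
  - exists k. unfold e2, e4. rewrite Nat.eqb_refl, Lk, HC by (unfold N; lia). discriminate.
  - exists (S N). unfold e3, e4. rewrite Nat.eqb_refl, LSN, HC by lia. discriminate.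
Qed.
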